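(* Let $F=\{f_i\}_{i=1}^N$ be a tight frame for $\mathcal H$. Then the following are equivalent: (i) $(F,S_F^{-1}F)\in\mathcal F^{(1)}$; (ii) $(F,S_F^{-1}F)\in\mathcal R^{(1)}$; (iii) $(F,S_F^{-1}F)\in\mathcal N^{(1)}$.
   Context: $\mathcal H$ is a complex Hilbert space of finite dimension $n$, inner product linear in the first argument, $N\ge n$. A finite sequence $F=\{f_i\}_{i=1}^N$ is a frame if there are $0<A\le B$ with $A\|f\|^2\le\sum_i|\langle f,f_i\rangle|^2\le B\|f\|^2$ for all $f$; tight if one can take $A=B$. $S_Ff=\sum_i\langle f,f_i\rangle f_i$; $S_F^{-1}F=\{S_F^{-1}f_i\}$ is the canonical dual. $G=\{g_i\}_{i=1}^N$ is a dual of $F$ if $f=\sum_i\langle f,g_i\rangle f_i$ for all $f$; $(F,G)$ is then an $(N,n)$ dual pair. $E_{\Lambda,F,G}f=\sum_{i\in\Lambda}\langle f,f_i\rangle g_i$. For a measure $\mathcal M$ on operators, let $\mathcal M^{(1)}_{F,G}=\max_{1\le i\le N}\mathcal M(E_{\{i\},F,G})$ and call $(F,G)$ optimal for $\mathcal M$ if $\mathcal M^{(1)}_{F,G}$ equals the infimum of $\mathcal M^{(1)}_{F',G'}$ over all $(N,n)$ dual pairs $(F',G')$ for $\mathcal H$. $\mathcal F^{(1)}$, $\mathcal R^{(1)}$, $\mathcal N^{(1)}$ denote the sets of optimal pairs for, respectively, the Frobenius norm $\|T\|_{\mathcal F}=\sqrt{\operatorname{tr}(T^*T)}$, the spectral radius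 $\rho(T)$, and the numerical radius $\omega(T)=\sup\{|\langle Tf,f\rangle|:\|f\|=1\}$. *)

(* Defs.v *)
(* R : realType, complex scalars C := R[i] (mathcomp-real-closed),
   the n-dimensional Hilbert space H is modelled as column vectors 'cV[R[i]]_n
   with the standard inner product (linear in the first argument),
   operators on H as matrices 'M[R[i]]_n acting by  A *m x. *)
From HB Require Import structures.
From mathcomp Require Import all_boot all_order all_algebra.
From mathcomp Require Import all_classical all_reals.
From mathcomp Require Export complex.
Set Implicit Arguments. Unset Strict Implicit. Unset Printing Implicit Defensive.
Import Order.TTheory GRing.Theory Num.Theory.
Local Open Scope ring_scope.
Local Open Scope classical_set_scope.

Section FrameDefs.
Variable R : realType.
Local Notation C := R[i].

Definition cmod (z : C) : R := complex.Re `|z|.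

Definition adj (m p : nat) (A : 'M[C]_(m, p)) : 'M[C]_(p, m) :=
  map_mx (fun z => z^*) A^T.

Definition inner (n : nat) (x y : 'cV[C]_n) : C := \sum_(k < n) x k 0 * (y k 0)^*.

Definition hnorm (n : nat) (x : 'cV[C]_n) : R := Num.sqrt (complex.Re (inner x x)).

Definition is_frame (n N : nat) (F : 'I_N -> 'cV[C]_n) : Prop :=
  exists A B : R, [/\ 0 < A, A <= B &
    forall f : 'cV[C]_n,
      A * hnorm f ^+ 2 <= \sum_(i < N) cmod (inner f (F i)) ^+ 2 /\
      \sum_(i < N) cmod (inner f (F i)) ^+ 2 <= B * hnorm f ^+ 2].

Definition is_tight_frame (n N : nat) (F : 'I_N -> 'cV[C]_n) : Prop :=
  exists A : R, 0 < A /\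
    forall f : 'cV[C]_n, \sum_(i < N) cmod (inner f (F i)) ^+ 2 = A * hnorm f ^+ 2.

(* frame operator S_F f = \sum_i <f, f_i> f_i, as the matrix \sum_i f_i f_i^* *)
Definition frame_op (n N : nat) (F : 'I_N -> 'cV[C]_n) : 'M[C]_n :=
  \sum_(i < N) (F i *m adj (F i)).

Definition canon_dual (n N : nat) (F : 'I_N -> 'cV[C]_n) : 'I_N -> 'cV[C]_n :=
  fun i => invmx (frame_op F) *m F i.

Definition is_dual (n N : nat) (F G : 'I_N -> 'cV[C]_n) : Prop :=
  forall f : 'cV[C]_n, f = \sum_(i < N) inner f (G i) *: F i.

Definition dual_pair (n N : nat) (F G : 'I_N -> 'cV[C]_n) : Prop :=
  is_frame F /\ is_dual F G.

(* E_{{i},F,G} f = <f, f_i> g_i, as the matrix g_i f_i^* *)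
Definition E1 (n N : nat) (F G : 'I_N -> 'cV[C]_n) (i : 'I_N) : 'M[C]_n :=
  G i *m adj (F i).

Definition frob_norm (n : nat) (T : 'M[C]_n) : R := Num.sqrt (complex.Re (\tr (adj T *m T))).

Definition spec_radius (n : nat) (T : 'M[C]_n) : R :=
  sup [set cmod l | l in [set l : C | eigenvalue T l]].

Definition num_radius (n : nat) (T : 'M[C]_n) : R :=
  sup [set cmod (inner (T *m f) f) | f in [set f : 'cV[C]_n | hnorm f = 1]].

(* M^{(1)}_{F,G} = max_i M(E_{{i},F,G}) ; for N = 0 this is 0 *)
Definition M1 (n N : nat) (M : 'M[C]_n -> R) (F G : 'I_N -> 'cV[C]_n) : R :=
  \big[Num.max/0]_(i < N) M (E1 F G i).

Definition optimal (n N : nat) (M : 'M[C]_n -> R) (F G : 'I_N -> 'cV[C]_n) : Prop :=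
  dual_pair F G /\
  M1 M F G = inf [set r : R | exists F' G' : 'I_N -> 'cV[C]_n,
                                dual_pair F' G' /\ r = M1 M F' G'].

End FrameDefs.

(* Main.v *)
Require Import Defs.
From HB Require Import structures.
From mathcomp Require Import all_boot all_order all_algebra.
From mathcomp Require Import all_classical all_reals.
From mathcomp Require Import complex.
From mathcomp Require Import ring lra.
From mathcomp Require Import cyclic cyclotomic separable.
Import Order.TTheory GRing.Theory Num.Theory.
Local Open Scope ring_scope.
Set Implicit Arguments. Unset Strict Implicit. Unset Printing Implicit Defensive.

Section Aux.
Variable R : realType.
Local Notation C := R[i].
Local Notation "x %:C" := (real_complex R x) : ring_scope.

Lemma innerE n (x y : 'cV[C]_n) : inner x y = (adj y *m x) 0 0.
Proof. by rewrite /inner mxE; apply: eq_bigr => k _; rewrite /adj !mxE mulrC. Qed.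

Lemma inner_conj n (x y : 'cV[C]_n) : (inner x y)^* = inner y x.
Proof. rewrite /inner rmorph_sum; apply: eq_bigr => k _. by rewrite rmorphM /= conjCK mulrC. Qed.

Lemma innerDl n (x y z : 'cV[C]_n) : inner (x + y) z = inner x z + inner y z.
Proof. rewrite /inner -big_split; apply: eq_bigr => k _; by rewrite mxE mulrDl. Qed.

Lemma innerZl n a (x z : 'cV[C]_n) : inner (a *: x) z = a * inner x z.
Proof. rewrite /inner mulr_sumr; apply: eq_bigr => k _; by rewrite mxE mulrA. Qed.

Lemma innerNl n (x z : 'cV[C]_n) : inner (- x) z = - inner x z.
Proof. by rewrite -scaleN1r innerZl mulN1r. Qed.

Lemma innerDr n (x y z : 'cV[C]_n) : inner z (x + y) = inner z x + inner z y.
Proof. by rewrite -[LHS]conjCK inner_conj innerDl rmorphD /= !inner_conj. Qed.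

Lemma innerZr n a (x z : 'cV[C]_n) : inner z (a *: x) = a^* * inner z x.
Proof. by rewrite -[LHS]conjCK inner_conj innerZl rmorphM /= !inner_conj. Qed.

Lemma innerNr n (x z : 'cV[C]_n) : inner z (- x) = - inner z x.
Proof. by rewrite -scaleN1r innerZr rmorphN1 mulN1r. Qed.

Lemma inner0r n (x : 'cV[C]_n) : inner x 0 = 0.
Proof. by rewrite -(subrr (0:'cV_n)) innerDr innerNr subrr. Qed.

Lemma inner0l n (x : 'cV[C]_n) : inner 0 x = 0.
Proof. by rewrite -(subrr (0:'cV_n)) innerDl innerNl subrr. Qed.

Lemma inner_ge0 n (x : 'cV[C]_n) : 0 <= inner x x.
Proof. by apply: sumr_ge0 => k _; rewrite mul_conjC_ge0. Qed.

Lemma inner_eq0 n (x : 'cV[C]_n) : (inner x x == 0) = (x == 0).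
Proof.
apply/idP/idP; last first.
  by move/eqP->; rewrite inner0r.
move/eqP/psumr_eq0P => H; apply/eqP/matrixP => k j.
rewrite (ord1 j) mxE; apply/eqP; rewrite -mul_conjC_eq0; apply/eqP.
by apply: H => // l _; rewrite mul_conjC_ge0.
Qed.

Lemma inner_real n (x : 'cV[C]_n) : inner x x \is Num.real.
Proof. by rewrite realE inner_ge0. Qed.

Lemma CS n (x y : 'cV[C]_n) : `|inner x y| ^+ 2 <= inner x x * inner y y.
Proof.
have [/eqP y0|yn0] := eqVneq (inner y y) 0.
  move: y0; rewrite inner_eq0 => /eqP ->.
  by rewrite inner0r inner0l normr0 expr0n mulr0.
pose t := inner x y / inner y y.
have yr : (inner y y)^* = inner y y by rewrite inner_conj.
have := inner_ge0 (x - t *: y).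
rewrite innerDl innerDr innerDr innerNl innerNr innerNl innerNr !innerZl !innerZr.
rewrite /t rmorphM rmorphV ?unitfE //= yr inner_conj normCK inner_conj.
have yp : 0 < inner y y by rewrite lt_def yn0 inner_ge0.
set E := (X in 0 <= X) => H.
have : 0 <= inner x x * inner y y - inner x y * inner y x.
  have -> : inner x x * inner y y - inner x y * inner y x = inner y y * E.
    by rewrite /E; field.
  exact: mulr_ge0 (ltW yp) H.
by rewrite subr_ge0.
Qed.


Lemma adjM m p q (A : 'M[C]_(m, p)) (B : 'M[C]_(p, q)) : adj (A *m B) = adj B *m adj A.
Proof.
apply/matrixP => i j; rewrite /adj !mxE rmorph_sum; apply: eq_bigr => k _.
by rewrite !mxE rmorphM /= mulrC.
Qed.

Lemma adjK m p (A : 'M[C]_(m, p)) : adj (adj A) = A.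
Proof. by apply/matrixP => i j; rewrite /adj !mxE conjCK. Qed.

Lemma adjZ m p a (A : 'M[C]_(m, p)) : adj (a *: A) = a^* *: adj A.
Proof. by apply/matrixP => i j; rewrite /adj !mxE rmorphM. Qed.

Lemma adjD m p (A B : 'M[C]_(m, p)) : adj (A + B) = adj A + adj B.
Proof. by apply/matrixP => i j; rewrite /adj !mxE rmorphD. Qed.

Lemma adj_eq0 m p (A : 'M[C]_(m, p)) : (adj A == 0) = (A == 0).
Proof.
apply/idP/idP => /eqP H; apply/eqP; last by rewrite H; apply/matrixP => i j; rewrite /adj !mxE conjC0.
by rewrite -(adjK A) H; apply/matrixP => i j; rewrite /adj !mxE conjC0.
Qed.

Lemma mul11 m (x : 'M[C]_(m, 1)) (s : 'M[C]_1) : x *m s = s 0 0 *: x.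
Proof. by rewrite {1}(mx11_scalar s) mul_mx_scalar. Qed.

Lemma mul11l m (x : 'M[C]_(1, m)) (s : 'M[C]_1) : s *m x = s 0 0 *: x.
Proof. by rewrite {1}(mx11_scalar s) mul_scalar_mx. Qed.

Lemma rank1_apply n (g f x : 'cV[C]_n) : (g *m adj f) *m x = inner x f *: g.
Proof. by rewrite -mulmxA mul11 innerE. Qed.

Lemma rank1_quad n (g f x : 'cV[C]_n) :
  inner ((g *m adj f) *m x) x = inner x f * inner g x.
Proof. by rewrite rank1_apply innerZl. Qed.

Definition nrm n (x : 'cV[C]_n) : R := complex.Re (inner x x).

Lemma nrmE n (x : 'cV[C]_n) : (nrm x)%:C = inner x x.
Proof. by rewrite /nrm RRe_real // inner_real. Qed.

Lemma nrm_ge0 n (x : 'cV[C]_n) : 0 <= nrm x.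
Proof. by rewrite -lecR nrmE inner_ge0. Qed.

Lemma cmodE (z : C) : (cmod z)%:C = `|z|.
Proof. by rewrite /cmod RRe_real // normr_real. Qed.

Lemma cmod_ge0 (z : C) : 0 <= cmod z.
Proof. by rewrite -lecR cmodE normr_ge0. Qed.

Lemma cmodM (a b : C) : cmod (a * b) = cmod a * cmod b.
Proof. by apply: complexI; rewrite rmorphM /= !cmodE normrM. Qed.

Lemma cmod_conj (a : C) : cmod a^* = cmod a.
Proof. by apply: complexI; rewrite !cmodE norm_conjC. Qed.

Lemma cmodR (r : R) : 0 <= r -> cmod r%:C = r.
Proof. by move=> r0; apply: complexI; rewrite cmodE ger0_norm // lecR. Qed.

Lemma hnorm_sqr n (x : 'cV[C]_n) : hnorm x ^+ 2 = nrm x.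
Proof. by rewrite /hnorm sqr_sqrtr // nrm_ge0. Qed.

Lemma hnorm_ge0 n (x : 'cV[C]_n) : 0 <= hnorm x.
Proof. by rewrite /hnorm sqrtr_ge0. Qed.

Lemma CSR n (x y : 'cV[C]_n) : cmod (inner x y) <= hnorm x * hnorm y.
Proof.
rewrite -(ler_pXn2r (_ : (0 < 2)%N)) ?nnegrE ?cmod_ge0 ?mulr_ge0 ?hnorm_ge0 //.
rewrite exprMn !hnorm_sqr -lecR !rmorphM /= !nrmE cmodE -expr2; exact: CS.
Qed.


Lemma conjR (r : R) : (r%:C)^* = r%:C.
Proof. by apply/eqP; rewrite eq_complex /= oppr0 !eqxx. Qed.

Lemma mulR (a b : R) : a%:C * b%:C = (a*b)%:C.
Proof. by apply/eqP; rewrite eq_complex /= !mulr0 !mul0r subr0 addr0 !eqxx. Qed.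

Lemma sup_le_c (S : set R) c : 0 <= c -> (forall s, S s -> s <= c) -> sup S <= c.
Proof.
move=> c0 H; have [->|/set0P ne] := eqVneq S set0; first by rewrite sup0.
by apply: ge_sup => // s /H.
Qed.

Lemma sup_ge_c (S : set R) x b : S x -> (forall s, S s -> s <= b) -> x <= sup S.
Proof. by move=> Sx H; apply: ub_le_sup => //; exists b => s /H. Qed.

Lemma sup_ge0c (S : set R) b : (forall s, S s -> 0 <= s) -> (forall s, S s -> s <= b) -> 0 <= sup S.
Proof.
move=> H0 H; have [->|/set0P [x Sx]] := eqVneq S set0; first by rewrite sup0.
exact: le_trans (H0 _ Sx) (sup_ge_c Sx H).
Qed.

Lemma inf_eqc (S : set R) c : S c -> (forall s, S s -> c <= s) -> inf S = c.
Proof.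
move=> Sc H; apply/eqP; rewrite eq_le; apply/andP; split.
  by apply: ge_inf => //; exists c => s /H.
by apply: lb_le_inf; [exists c | move=> s /H].
Qed.

Lemma eig_rank1 n (g f : 'cV[C]_n) l :
  eigenvalue (g *m adj f) l -> l = 0 \/ l = inner g f.
Proof.
case/eigenvalueP => v Hv vn0; have [->|ln0] := eqVneq l 0; first by left.
right; rewrite mulmxA mul11l in Hv.
set s := (v *m g) 0 0 in Hv.
have ev : v = (s / l) *: adj f.
  by apply: (scalerI ln0); rewrite -Hv scalerA mulrCA mulfV ?mulr1.
have sn0 : s != 0.
  apply: contraNneq vn0 => s0; apply/eqP.
  by move: Hv; rewrite s0 scale0r => /esym/eqP; rewrite scaler_eq0 (negbTE ln0) => /eqP.
have : s = s / l * inner g f.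
  by rewrite {1}/s {1}ev -scalemxAl mxE innerE.
move=> H; apply: (mulfI sn0); by rewrite {1}H mulrAC mulfVK.
Qed.

Lemma eig_rank1_mem n (g f : 'cV[C]_n) : f != 0 -> eigenvalue (g *m adj f) (inner g f).
Proof.
move=> fn0; apply/eigenvalueP; exists (adj f); last by rewrite adj_eq0.
by rewrite mulmxA mul11l innerE.
Qed.

Lemma spec_rank1 n (g f : 'cV[C]_n) : spec_radius (g *m adj f) = cmod (inner g f).
Proof.
rewrite /spec_radius; set S := (X in sup X).
have ub : forall s, S s -> s <= cmod (inner g f).
  move=> s [l /eig_rank1 [->|->] <-] //.
  by rewrite /cmod normr0 cmod_ge0.
apply/eqP; rewrite eq_le sup_le_c ?cmod_ge0 //=.
have [f0|fn0] := eqVneq f 0.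
  rewrite f0 inner0r /cmod normr0; apply: (sup_ge0c _ ub) => s [l _ <-].
  exact: cmod_ge0.
by apply: sup_ge_c ub; exists (inner g f) => //; apply: eig_rank1_mem.
Qed.

Lemma frob_rank1 n (g f : 'cV[C]_n) : frob_norm (g *m adj f) = hnorm g * hnorm f.
Proof.
rewrite /frob_norm adjM adjK mulmxA -(mulmxA f) mul11 -scalemxAl mxtraceZ.
rewrite mxtrace_mulC trace_mx11 -!innerE -!nrmE -rmorphM /=.
by rewrite sqrtrM ?nrm_ge0.
Qed.

Lemma num_rank1_le n (g f : 'cV[C]_n) : num_radius (g *m adj f) <= hnorm g * hnorm f.
Proof.
rewrite /num_radius; apply: sup_le_c; first by rewrite mulr_ge0 ?hnorm_ge0.
move=> s [x /= hx <-]; rewrite rank1_quad cmodM.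
have := CSR x f; have := CSR g x; rewrite hx mul1r mulr1 => H1 H2.
by rewrite mulrC ler_pM ?cmod_ge0.
Qed.

Lemma num_rank1_ge n (g f : 'cV[C]_n) : cmod (inner g f) <= num_radius (g *m adj f).
Proof.
rewrite /num_radius; set S := (X in sup X).
have ub : forall s, S s -> s <= hnorm g * hnorm f.
  move=> s [x /= hx <-]; rewrite rank1_quad cmodM.
  have := CSR x f; have := CSR g x; rewrite hx mul1r mulr1 => H1 H2.
  by rewrite mulrC ler_pM ?cmod_ge0.
have [f0|fn0] := eqVneq f 0.
  rewrite f0 inner0r /cmod normr0; apply: (sup_ge0c _ ub) => s [x _ <-].
  exact: cmod_ge0.
have hp : 0 < hnorm f.
  rewrite /hnorm sqrtr_gt0 -ltcR nrmE lt_def inner_ge0 andbT inner_eq0 //.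
pose x := ((hnorm f)^-1)%:C *: f.
have hx : nrm x = 1.
  apply: complexI; rewrite nrmE innerZl innerZr conjR -nrmE -!rmorphM /=.
  by rewrite -hnorm_sqr mulrA -expr2 -exprMn mulVf ?expr1n // gt_eqF.
apply: (sup_ge_c _ ub); exists x.
  by rewrite /= /hnorm -/(nrm x) hx sqrtr1.
rewrite rank1_quad innerZl innerZr conjR -nrmE -hnorm_sqr; congr cmod.
rewrite mulrA mulR mulR.
have -> : (hnorm f)^-1 * hnorm f ^+ 2 / hnorm f = 1 by field; rewrite gt_eqF.
by rewrite mul1r.
Qed.


Lemma sum_apply n N (F G : 'I_N -> 'cV[C]_n) f :
  \sum_(i < N) inner f (G i) *: F i = (\sum_(i < N) F i *m adj (G i)) *m f.
Proof. by rewrite mulmx_suml; apply: eq_bigr => i _; rewrite rank1_apply. Qed.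

Lemma mx_id n (M : 'M[C]_n) : (forall f : 'cV[C]_n, M *m f = f) -> M = 1%:M.
Proof.
move=> H; apply/matrixP => i j.
have := H (delta_mx j 0); rewrite -colE => /matrixP /(_ i 0).
rewrite !mxE eqxx andbT => ->; by case: (i == j).
Qed.

Lemma dual_id n N (F G : 'I_N -> 'cV[C]_n) :
  is_dual F G -> \sum_(i < N) F i *m adj (G i) = 1%:M.
Proof. by move=> H; apply: mx_id => f; rewrite -sum_apply -H. Qed.

Lemma dual_trace n N (F G : 'I_N -> 'cV[C]_n) :
  is_dual F G -> \sum_(i < N) inner (F i) (G i) = n%:R.
Proof.
move/dual_id => H; rewrite -(mxtrace1 C n) -H raddf_sum /=.
by apply: eq_bigr => i _; rewrite mxtrace_mulC trace_mx11 innerE.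
Qed.

Definition good (M : forall n, 'M[C]_n -> R) :=
  forall n (g f : 'cV[C]_n), cmod (inner g f) <= M n (g *m adj f) /\
                             M n (g *m adj f) <= hnorm g * hnorm f.

Lemma good_frob : good (@frob_norm R).
Proof. by move=> n g f; rewrite frob_rank1 CSR. Qed.

Lemma good_spec : good (@spec_radius R).
Proof. by move=> n g f; rewrite spec_rank1 CSR. Qed.

Lemma good_num : good (@num_radius R).
Proof. by move=> n g f; rewrite num_rank1_ge num_rank1_le. Qed.

Lemma M1_ge0 n N (M : 'M[C]_n -> R) (F G : 'I_N -> 'cV[C]_n) : 0 <= M1 M F G.
Proof. exact: bigmax_ge_id. Qed.

Lemma M1_lower M (gM : good M) n N (F G : 'I_N -> 'cV[C]_n) :
  is_dual F G -> n%:R / N%:R <= M1 (M n) F G.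
Proof.
move=> dFG; have [N0|Np] := posnP N.
  have -> : (N%:R : R) = 0 by rewrite N0.
  by rewrite invr0 mulr0 M1_ge0.
rewrite ler_pdivrMr ?ltr0n //.
have H1 : n%:R <= \sum_(i < N) cmod (inner (F i) (G i)).
  rewrite -lecR rmorph_sum /= rmorph_nat.
  under eq_bigr do rewrite cmodE.
  by rewrite -(dual_trace dFG) -[X in X <= _]ger0_norm ?ler_norm_sum // dual_trace ?ler0n.
apply: le_trans H1 _.
have -> : M1 (M n) F G * N%:R = \sum_(i < N) M1 (M n) F G.
  by rewrite sumr_const card_ord mulr_natr.
apply: ler_sum => i _.
rewrite -inner_conj cmod_conj; apply: le_trans (proj1 (gM n (G i) (F i))) _.
exact: le_bigmax (fun i => M n (E1 F G i)) i.
Qed.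


Lemma cmod2 (z : C) : ((cmod z) ^+ 2)%:C = `|z| ^+ 2.
Proof. by rewrite expr2 -mulR cmodE expr2. Qed.

Lemma entryD (A B : 'M[C]_1) : (A + B) 0 0 = A 0 0 + B 0 0.
Proof. by rewrite mxE. Qed.

Lemma entryZ a (A : 'M[C]_1) : (a *: A) 0 0 = a * A 0 0.
Proof. by rewrite mxE. Qed.

Lemma entryN (A : 'M[C]_1) : (- A) 0 0 = - A 0 0.
Proof. by rewrite mxE. Qed.

Lemma quad_expand n (D : 'M[C]_n) (x y : 'cV[C]_n) a :
  (adj (x + a *: y) *m D *m (x + a *: y)) 0 0 =
  (adj x *m D *m x) 0 0 + a * (adj x *m D *m y) 0 0 +
  a^* * (adj y *m D *m x) 0 0 + a^* * a * (adj y *m D *m y) 0 0.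
Proof.
rewrite adjD adjZ !mulmxDl !mulmxDr -!scalemxAl -!scalemxAr !entryD !entryZ.
ring.
Qed.

Lemma Bdelta n (D : 'M[C]_n) k l :
  (adj (delta_mx k 0 : 'cV[C]_n) *m D *m (delta_mx l 0 : 'cV[C]_n)) 0 0 = D k l.
Proof.
have -> : adj (delta_mx k 0 : 'cV[C]_n) = (delta_mx 0 k : 'rV[C]_n).
  by apply/matrixP => i j; rewrite /adj !mxE rmorph_nat andbC.
by rewrite -rowE -colE !mxE.
Qed.

Lemma polar n (D : 'M[C]_n) : (forall f : 'cV[C]_n, (adj f *m D *m f) 0 0 = 0) -> D = 0.
Proof.
move=> H; apply/matrixP => k l; rewrite [RHS]mxE.
have h1 := H (delta_mx k 0 + 1 *: delta_mx l 0).
have h2 := H (delta_mx k 0 + 'i *: delta_mx l 0).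
rewrite quad_expand !Bdelta in h1; rewrite quad_expand !Bdelta in h2.
have dk := H (delta_mx k 0); have dl := H (delta_mx l 0).
rewrite !Bdelta in dk dl.
rewrite dk dl conjC1 conjCi in h1 h2.
have : (2 * 'i) * D k l = 0.
  have -> : (2 * 'i) * D k l = 'i * (0 + 1 * D k l + 1 * D l k + 1 * 1 * 0) +
                              (0 + 'i * D k l + - 'i * D l k + - 'i * 'i * 0) by ring.
  by rewrite h1 h2 mulr0 addr0.
move/eqP; rewrite mulf_eq0 => /orP [|/eqP //].
by rewrite mulf_eq0 (negbTE (neq0Ci _)) pnatr_eq0 orbF.
Qed.

Lemma quad_op n N (F : 'I_N -> 'cV[C]_n) f :
  (adj f *m frame_op F *m f) 0 0 = \sum_(i < N) `|inner f (F i)| ^+ 2.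
Proof.
rewrite /frame_op mulmx_sumr mulmx_suml summxE; apply: eq_bigr => i _.
rewrite !mulmxA -(mulmxA _ _ f) mul11l mxE -(innerE (F i) f) -(innerE f (F i)).
by rewrite normCK inner_conj mulrC.
Qed.

Lemma tight_op n N (F : 'I_N -> 'cV[C]_n) :
  is_tight_frame F -> exists A : R, 0 < A /\ frame_op F = (A%:C)%:M.
Proof.
case=> A [A0 HA]; exists A; split => //.
apply/eqP; rewrite -subr_eq0; apply/eqP; apply: polar => f.
rewrite mulmxBr mulmxBl entryD entryN quad_op mul_mx_scalar -scalemxAl entryZ -(innerE f f).
have := HA f; move/(congr1 (real_complex R)).
rewrite rmorph_sum /= -mulR hnorm_sqr nrmE.
under eq_bigr do rewrite cmod2.
by move=> ->; rewrite subrr.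
Qed.

Lemma tight_dual n N (F : 'I_N -> 'cV[C]_n) A :
  0 < A -> frame_op F = (A%:C)%:M -> forall i, canon_dual F i = (A^-1)%:C *: F i.
Proof.
move=> A0 HF i; rewrite /canon_dual HF invmx_scalar mul_scalar_mx; congr (_ *: _).
by rewrite fmorphV.
Qed.


Lemma nrmZ n (c : R) (u : 'cV[C]_n) : nrm (c%:C *: u) = c ^+ 2 * nrm u.
Proof.
by apply: complexI; rewrite nrmE innerZl innerZr conjR -nrmE !mulR mulrA expr2.
Qed.

Lemma good_val M (gM : good M) n (c : R) (u : 'cV[C]_n) :
  0 <= c -> M n ((c%:C *: u) *m adj u) = c * nrm u.
Proof.
move=> c0; have [h1 h2] := gM n (c%:C *: u) u.
apply/eqP; rewrite eq_le; apply/andP; split.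
  apply: le_trans h2 _; rewrite /hnorm -sqrtrM -/(nrm _) -/(nrm u) ?nrm_ge0 // nrmZ -mulrA -expr2.
  by rewrite -exprMn sqrtr_sqr ger0_norm // mulr_ge0 ?nrm_ge0.
apply: le_trans h1; rewrite innerZl -nrmE mulR cmodR //.
by rewrite mulr_ge0 ?nrm_ge0.
Qed.

Lemma M1_tight M (gM : good M) n N (F : 'I_N -> 'cV[C]_n) A :
  0 < A -> frame_op F = (A%:C)%:M ->
  M1 (M n) F (canon_dual F) = \big[Num.max/0]_(i < N) (A^-1 * nrm (F i)).
Proof.
move=> A0 HF; apply: eq_bigr => i _; rewrite /E1 (tight_dual A0 HF).
by rewrite good_val // invr_ge0 ltW.
Qed.

Lemma prim_root_exists N : (N > 0)%N -> exists z : C, N.-primitive_root z.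
Proof.
pose p : {poly C} := 'X^N - 1; have [r Dp] := closed_field_poly_normal p.
move=> n_gt0; rewrite (monicP _) ?monicXnsubC // scale1r in Dp.
have rn1: all N.-unity_root r by apply/allP=> z; rewrite -root_prod_XsubC -Dp.
have sz_r: (N < (size r).+1)%N.
  by rewrite -(size_prod_XsubC r id) -Dp size_XnsubC.
have [|z] := hasP (has_prim_root n_gt0 rn1 _ sz_r); last by exists z.
by rewrite -separable_prod_XsubC -Dp separable_Xn_sub_1 // pnatr_eq0 -lt0n.
Qed.


Lemma geom0 (z : C) N : z ^+ N = 1 -> z != 1 -> \sum_(j < N) z ^+ j = 0.
Proof.
move=> zN z1; have := subrX1 z N; rewrite zN subrr => /esym/eqP.
by rewrite mulf_eq0 subr_eq0 (negbTE z1) => /eqP.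
Qed.

Lemma harmonic n N : (n <= N)%N ->
  exists U : 'I_N -> 'cV[C]_n, frame_op U = (N%:R : C)%:M /\ forall i, nrm (U i) = n%:R.
Proof.
move=> nN; have [n0|np] := posnP n.
  subst n; exists (fun _ => 0); split; first by apply/matrixP => -[].
  by move=> i; rewrite /nrm inner0r.
have Np : (0 < N)%N by apply: leq_trans nN.
have [w pw] := prim_root_exists Np.
have wN : w ^+ N = 1 := prim_expr_order pw.
have nw : `|w| = 1.
  by apply/eqP; rewrite -(pexpr_eq1 Np) ?normr_ge0 // -normrX wN normr1.
have w0 : w != 0 by rewrite -normr_eq0 nw oner_eq0.
have wc : w^* = w ^+ N.-1.
  apply: (mulfI w0); rewrite -exprS prednK // wN.
  by rewrite -normCK nw expr1n.
exists (fun j => \col_(k < n) w ^+ (j * k)); split.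
  apply/matrixP => k l; rewrite summxE [RHS]mxE.
  under eq_bigr => j _ do rewrite !mxE big_ord1 !mxE rmorphXn /= wc -exprM -exprD.
  have e : forall j : 'I_N, (j * k + N.-1 * (j * l) = (k + N.-1 * l) * j)%N.
    by move=> j; rewrite mulnDl mulnC; congr (_ + _)%N; rewrite mulnCA mulnC.
  under eq_bigr => j _ do rewrite e exprM.
  set z := w ^+ (k + N.-1 * l).
  have zN : z ^+ N = 1 by rewrite /z -exprM mulnC exprM wN expr1n.
  have [kl|kl] := eqVneq k l.
    have z1 : z = 1.
      by rewrite /z kl -{1}(mul1n l) -mulnDl add1n prednK // exprM wN expr1n.
    under eq_bigr do rewrite z1 expr1n.
    by rewrite sumr_const card_ord.
  rewrite geom0 // ?(negbTE kl) ?mulr0n //.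
  rewrite /z -(expr0 w) (eq_prim_root_expr pw) mod0n.
  apply: contra kl => /eqP H.
  have : ((k + N.-1 * l) + l = l %[mod N])%N by rewrite -modnDml H.
  rewrite -addnA -{2}(mul1n l) -mulnDl addn1 prednK // addnC mulnC modnMDl.
  by rewrite !modn_small ?(leq_trans (ltn_ord _) nN) // => /eqP; rewrite -val_eqE.
move=> j; apply: complexI; rewrite nrmE rmorph_nat /inner.
under eq_bigr => k _ do rewrite !mxE -normCK normrX nw expr1n expr1n.
by rewrite sumr_const card_ord.
Qed.


Lemma frame_sum n N (U : 'I_N -> 'cV[C]_n) (B : R) :
  frame_op U = (B%:C)%:M ->
  forall f, \sum_(i < N) cmod (inner f (U i)) ^+ 2 = B * hnorm f ^+ 2.
Proof.
move=> HU f; apply: complexI; rewrite rmorph_sum /= -mulR hnorm_sqr nrmE.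
under eq_bigr do rewrite cmod2.
by rewrite -quad_op HU mul_mx_scalar -scalemxAl entryZ -(innerE f f).
Qed.

Lemma pair_ok n N (U : 'I_N -> 'cV[C]_n) (B : R) :
  0 < B -> frame_op U = (B%:C)%:M -> dual_pair U (fun i => (B^-1)%:C *: U i).
Proof.
move=> B0 HU; split.
  by exists B, B; split => // f; rewrite (frame_sum HU).
move=> f; rewrite sum_apply.
under eq_bigr do rewrite adjZ conjR -scalemxAr.
rewrite -scaler_sumr -/(frame_op U) HU scale_scalar_mx.
by rewrite mulR mulVf ?gt_eqF // mul1mx.
Qed.

Lemma harm_pair M (gM : good M) n N : (n <= N)%N ->
  exists F' G' : 'I_N -> 'cV[C]_n, dual_pair F' G' /\ M1 (M n) F' G' = n%:R / N%:R.
Proof.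
move=> nN; have [U [HU nU]] := harmonic nN.
have [N0|Np] := posnP N.
  subst N; have n0 : n = 0%N by apply/eqP; rewrite -leqn0.
  subst n; exists U, (fun i => (1^-1)%:C *: U i); split.
    by apply: pair_ok => //; apply/matrixP => -[].
  by rewrite /M1 big_ord0 mul0r.
exists U, (fun i => ((N%:R)^-1)%:C *: U i); split.
  by apply: (pair_ok (B := N%:R)); rewrite ?ltr0n // rmorph_nat.
rewrite /M1; under eq_bigr do rewrite /E1 good_val ?invr_ge0 ?ler0n // nU.
rewrite mulrC; apply/eqP; rewrite eq_le bigmax_le ?mulr_ge0 ?invr_ge0 ?ler0n //=.
exact: (le_bigmax 0 (fun _ : 'I_N => n%:R / N%:R : R) (Ordinal Np)).
Qed.

Lemma inf_val M (gM : good M) n N : (n <= N)%N ->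
  inf [set r : R | exists F' G' : 'I_N -> 'cV[C]_n, dual_pair F' G' /\ r = M1 (M n) F' G']
  = n%:R / N%:R.
Proof.
move=> nN; apply: inf_eqc.
  by have [F' [G' [dp e]]] := harm_pair gM nN; exists F', G'; split; rewrite ?e.
by move=> s [F' [G' [[_ d] ->]]]; apply: M1_lower.
Qed.


End Aux.

Theorem theorem6p2 (R : realType) (n N : nat) (F : 'I_N -> 'cV[R[i]]_n) :
  (n <= N)%N ->
  is_tight_frame F ->
  [<-> optimal (@frob_norm R n) F (canon_dual F);
       optimal (@spec_radius R n) F (canon_dual F);
       optimal (@num_radius R n) F (canon_dual F)].
Proof.
move=> nN tF.
have [A [A0 HF]] := tight_op tF.
have dp : dual_pair F (canon_dual F).
  have -> : canon_dual F = (fun i => (A^-1)%:C%C *: F i).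
    by apply: funext => i; exact: tight_dual.
  exact: pair_ok.
have key : forall M, good M -> (optimal (M n) F (canon_dual F) <->
    \big[Num.max/0]_(i < N) (A^-1 * nrm (F i)) = n%:R / N%:R).
  move=> M gM; rewrite /optimal inf_val // (M1_tight gM A0 HF).
  by split; [case | split].
have k1 := key _ (@good_frob R); have k2 := key _ (@good_spec R); have k3 := key _ (@good_num R).
split; [|split] => [/k1/k2 | /k2/k3 | /k3/k1] //.
Qed.
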